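(* Let $X$ be an $X$-set parameter, let $G$ and $G'$ be graphs with no isolated vertices, and suppose $\varphi:\mathscr{X}^{\rm TAR}(G)\to\mathscr{X}^{\rm TAR}(G')$ is a graph isomorphism. Then $|\varphi(S)|=|S|$ for every $X$-set $S$ of $G$ if and only if there exists a bijection $\psi:V(G)\to V(G')$ such that $\psi(S)=\varphi(S)$ for every $X$-set $S$ of $G$ (where $\psi(S)=\{\psi(s):s\in S\}$).
   Context: All graphs are simple, finite, with nonempty vertex set. An $X$-set parameter is a graph parameter $X(G)$ defined as the minimum cardinality of an $X$-set of $G$, where the $X$-sets of each graph are subsets of its vertex set determined by some property satisfying: (1) supersets (within $V(G)$) of $X$-sets are $X$-sets; (2) the empty set is never an $X$-set; (3) an $X$-set of a disconnected graph is the union of an $X$-set of each component; (4) if $G$ has no isolated vertices, every set of $|V(G)|-1$ vertices is an $X$-set. The $X$-TAR graph $\mathscr{X}^{\rm TAR}(G)$ has as vertices all $X$-sets of $G$, with $S_1,S_2$ adjacent iff $|S_1\ominus S_2|=1$ (symmetric difference). *)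

(* Defs.v *)
From mathcomp Require Import all_boot.
Set Implicit Arguments. Unset Strict Implicit. Unset Printing Implicit Defensive.

Definition is_graph (T : finType) (e : rel T) : Prop :=
  [/\ 0 < #|T|, symmetric e & irreflexive e].

Definition no_isolated (T : finType) (e : rel T) : Prop :=
  forall x : T, exists y : T, e x y.

Definition disconnected (T : finType) (e : rel T) : Prop :=
  exists x y : T, ~~ connect e x y.

Definition comp (T : finType) (e : rel T) (x : T) : {set T} :=
  [set y | connect e x y].

Definition ind_type (T : finType) (C : {set T}) : finType := {y : T | y \in C}.
Definition ind_rel (T : finType) (e : rel T) (C : {set T}) : rel (ind_type C) :=
  fun u v => e (val u) (val v).
Definition restr (T : finType) (C : {set T}) (S : {set T}) : {set ind_type C} :=
  [set u : ind_type C | val u \in S].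

Arguments ind_rel [T] e C.
Arguments restr [T] C S.

(* A graph property selecting, for every graph, its X-sets. *)
Definition Xprop := forall (T : finType), rel T -> pred {set T}.

Definition is_Xset_param (X : Xprop) : Prop :=
  (forall (T : finType) (e : rel T) (S S' : {set T}), is_graph e ->
     X T e S -> S \subset S' -> X T e S') /\
  (forall (T : finType) (e : rel T), is_graph e -> ~~ X T e set0) /\
  (* (3) X-sets of a disconnected graph = unions of X-sets of the components *)
  (forall (T : finType) (e : rel T) (S : {set T}), is_graph e -> disconnected e ->
     (X T e S <-> forall x : T,
        X (ind_type (comp e x)) (ind_rel e (comp e x)) (restr (comp e x) S))) /\
  (forall (T : finType) (e : rel T) (S : {set T}), is_graph e -> no_isolated e ->
     #|S| = #|T| - 1 -> X T e S).

Definition symdiff (T : finType) (A B : {set T}) : {set T} := (A :\: B) :|: (B :\: A).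

Definition TARV (X : Xprop) (T : finType) (e : rel T) : finType :=
  {S : {set T} | X T e S}.
Definition TARadj (X : Xprop) (T : finType) (e : rel T) : rel (TARV X e) :=
  fun A B => #|symdiff (val A) (val B)| == 1.

Arguments TARadj X [T] e.

Definition graph_iso (U V : finType) (eU : rel U) (eV : rel V) (f : U -> V) : Prop :=
  bijective f /\ forall a b : U, eV (f a) (f b) = eU a b.

(* Main.v *)
Require Import Defs.
From mathcomp Require Import all_boot.
From mathcomp Require Import zify.

Lemma symdiff_sub (T : finType) (A B : {set T}) :
  #|symdiff A B| = 1 -> #|B| = #|A| + 1 -> A \subset B.
Proof.
move=> H1 H2; rewrite -setD_eq0; apply/eqP/cards0_eq.
have Hd : #|symdiff A B| = #|A :\: B| + #|B :\: A|.
  rewrite /symdiff cardsU.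
  have -> : (A :\: B) :&: (B :\: A) = set0.
    by apply/setP=> x; rewrite !inE; case: (x \in A); case: (x \in B).
  by rewrite cards0; lia.
have HA := cardsID B A; have HB := cardsID A B.
rewrite setIC in HB. lia.
Qed.

Lemma symdiff_add1 (T : finType) (S : {set T}) u :
  u \notin S -> #|symdiff S (u |: S)| = 1.
Proof.
move=> Hu; have -> : symdiff S (u |: S) = [set u].
  apply/setP=> x; rewrite !inE; case: (eqVneq x u) => [->|]; first by rewrite (negbTE Hu).
  by case: (x \in S).
by rewrite cards1.
Qed.

Theorem theorem2p12 (X : Xprop) (HX : is_Xset_param X)
  (T T' : finType) (e : rel T) (e' : rel T')
  (HG : is_graph e) (HG' : is_graph e')
  (HnG : no_isolated e) (HnG' : no_isolated e')
  (phi : TARV X e -> TARV X e')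
  (Hphi : graph_iso (TARadj X e) (TARadj X e') phi) :
  (forall S : TARV X e, #|val (phi S)| = #|val S|) <->
  (exists psi : T -> T', bijective psi /\
     forall S : TARV X e, psi @: val S = val (phi S)).
Proof.
case: HX => HX1 [_ [_ HX4]].
case: Hphi => [[g phig gphi] Hadj].
split; last first.
  move=> [psi [Hpsi HS]] S; rewrite -HS card_imset //; exact: bij_inj.
move=> Hcard.
have HXm : forall v, X T e (setT :\ v).
  move=> v; apply: HX4 => //; rewrite -cardsT (cardsD1 v setT) inE; lia.
have HXm' : forall v, X T' e' (setT :\ v).
  move=> v; apply: HX4 => //; rewrite -cardsT (cardsD1 v setT) inE; lia.
have [x0 _] : exists x : T, x \in T by apply/card_gt0P; case: HG.
have [y0 _] : exists x : T', x \in T' by apply/card_gt0P; case: HG'.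
have HXT : X T e setT by apply: (HX1 _ _ _ _ HG (HXm x0)); exact: subsetT.
have HXT' : X T' e' setT by apply: (HX1 _ _ _ _ HG' (HXm' y0)); exact: subsetT.
pose Vf : TARV X e := exist _ setT HXT.
pose Vf' : TARV X e' := exist _ setT HXT'.
have HTT : #|T| = #|T'|.
  apply/eqP; rewrite eqn_leq; apply/andP; split.
    by rewrite -cardsT -(Hcard Vf); exact: max_card.
  by rewrite -cardsT -[X in X <= _]/#|val Vf'| -(gphi Vf') Hcard; exact: max_card.
have HphiV : val (phi Vf) = setT.
  by apply/eqP; rewrite eqEcard subsetT cardsT Hcard /= cardsT HTT.
pose Vm v : TARV X e := exist _ (setT :\ v) (HXm v).
have Hex : forall v, exists w, val (phi (Vm v)) == setT :\ w.
  move=> v.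
  have H1 : TARadj X e' (phi (Vm v)) (phi Vf).
    rewrite Hadj /TARadj /=.
    have -> : symdiff ([set: T] :\ v) [set: T] = [set v].
      by apply/setP=> x; rewrite !inE; case: (x == v).
    by rewrite cards1.
  move: H1; rewrite /TARadj HphiV => /cards1P [w Hw]; exists w.
  apply/eqP/setP => x; move/setP: Hw => /(_ x); rewrite !inE /=.
  by case: (x \in val (phi (Vm v))); case: (x == w).
pose psi v := xchoose (Hex v).
have Hpsi : forall v, val (phi (Vm v)) = setT :\ psi v.
  by move=> v; apply/eqP; exact: (xchooseP (Hex v)).
have psi_inj : injective psi.
  move=> u v Huv.
  have : Vm u = Vm v by apply: (can_inj phig); apply: val_inj; rewrite !Hpsi Huv.
  move=> /(congr1 val) /= /setP /(_ u); rewrite !inE eqxx /=.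
  by case: (eqVneq u v).
have psi_bij : bijective psi by apply: inj_card_bij => //; rewrite HTT.
exists psi; split => //.
have psi_sub : forall S S' : TARV X e, val S' = val S -> S' = S.
  by move=> S S' H; apply: val_inj.
suff H : forall k (S : TARV X e), #|~: val S| = k -> psi @: val S = val (phi S).
  by move=> S; exact: (H _ S erefl).
elim.
  move=> S HS.
  have HS' : val S = setT.
    apply/setP=> x; move/cards0_eq/setP: HS => /(_ x); rewrite !inE.
    by case: (x \in val S).
  rewrite (psi_sub Vf S HS') HphiV /=.
  apply/eqP; rewrite eqEcard subsetT cardsT card_imset // cardsT HTT leqnn; reflexivity.
move=> k IH S HS.
case: k IH HS => [|k] IH HS.
  move/eqP/cards1P: HS => [v Hv].
  have HS' : val S = setT :\ v.
    apply/setP=> x; move/setP: Hv => /(_ x); rewrite !inE.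
    by case: (x \in val S); case: (x == v).
  rewrite (psi_sub (Vm v) S HS') Hpsi /=.
  apply/eqP; rewrite eqEcard; apply/andP; split.
    apply/subsetP=> y /imsetP [x]; rewrite !inE => Hx ->.
    by rewrite (inj_eq psi_inj).
  rewrite card_imset //.
  have := cardsD1 v [set: T]; have := cardsD1 (psi v) [set: T'].
  rewrite !inE !cardsT HTT; lia.
have [u Hu] : exists u, u \in ~: val S by apply/card_gt0P; rewrite HS.
have [v Hv] : exists v, v \in ~: val S :\ u.
  by apply/card_gt0P; move: HS; rewrite (cardsD1 u) Hu; lia.
have Huv : v != u by move: Hv; rewrite !inE; case/andP.
have Hv' : v \in ~: val S by move: Hv; rewrite !inE; case/andP.
have step : forall w, w \in ~: val S -> val (phi S) \subset psi @: (w |: val S).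
  move=> w Hw.
  have Hw' : w \notin val S by move: Hw; rewrite inE.
  pose Sw : TARV X e := exist _ (w |: val S) (HX1 _ _ _ _ HG (valP S) (subsetUr _ _)).
  have HSw : #|~: val Sw| = k.+1.
    move: HS; rewrite /= setCU (cardsD1 w (~: val S)) Hw.
    have -> : ~: [set w] :&: ~: val S = ~: val S :\ w.
      by apply/setP=> x; rewrite !inE andbC.
    lia.
  rewrite (IH Sw HSw); apply: symdiff_sub.
    have := Hadj S Sw; rewrite /TARadj /= symdiff_add1 // eqxx => /eqP.
    by [].
  by rewrite !Hcard /= cardsU1 Hw'; lia.
have Hsub : val (phi S) \subset psi @: val S.
  have -> : val S = (u |: val S) :&: (v |: val S).
    apply/setP=> x; rewrite !inE.
    case: (eqVneq x u) => [->|Hxu] /=; first by rewrite eq_sym (negbTE Huv).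
    by case: (x == v) => /=; case: (x \in val S).
  rewrite imsetI; last by move=> a b _ _; exact: psi_inj.
  by rewrite subsetI !step.
apply/esym/eqP; rewrite eqEcard Hsub card_imset // Hcard leqnn.
reflexivity.
Qed.
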